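(* Let $\Gamma$ be a splice diagram satisfying the edge determinant and semigroup conditions. Then for all nodes $u,v$ of $\Gamma$ and every edge $e$ adjacent to $v$, the admissible co-weight satisfies $w_u\cdot m_{v,e}\geq \ell_{u,v}$, with equality if and only if $e\not\subseteq[u,v]$.
   Context: A splice diagram is a finite tree $\Gamma$ with at least one vertex of valency $\geq3$ and no vertex of valency $2$; vertices of valency $1$ are leaves, the others nodes. For each node $v$ and edge $e$ at $v$ a positive integer weight $d_{v,e}$ is given; $d_{v,u}:=d_{v,e}$ for $e$ the edge at $v$ on the geodesic $[v,u]$; $d_v=\prod_{e\ni v}d_{v,e}$. For distinct vertices $u,v$, $\ell_{u,v}$ is the product of all $d_{w,e}$ with $w$ a node on $[u,v]$ and $e$ an edge at $w$ not in $[u,v]$; $\ell_{v,v}:=d_v$. Edge determinant condition: $d_{u,v}d_{v,u}>\ell_{u,v}$ for each edge between two nodes. Semigroup condition: for each node $v$ and edge $e$ at $v$, $d_v\in\sum_{\lambda\in L(v,e)}\mathbb{N}\,\ell_{v,\lambda}$, $L(v,e)$ being the set of leaves $\lambda$ with $e\subseteq[v,\lambda]$. With $n$ leaves, $\mathbb{R}^n$ has standard basis $(w_\lambda)$ indexed by leaves, and $w_u=\sum_\lambda\ell_{u,\lambda}w_\lambda$ for a node $u$. An admissible co-weight is $m_{v,e}=\sum_{\lambda\in L(v,e)}\alpha_{v,e,\lambda}w_\lambda$ where $\alpha_{v,e,\lambda}\in\mathbb{N}$ are any fixed numbers with $d_v=\sum_{\lambda\in L(v,e)}\alpha_{v,e,\lambda}\ell_{v,\lambda}$.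 When $u=v$, $[u,v]$ is the single vertex $v$. *)

(* Defs.v *)
From mathcomp Require Import all_boot.
From Stdlib Require Import ClassicalEpsilon.
Set Implicit Arguments. Unset Strict Implicit. Unset Printing Implicit Defensive.

Definition asb (P : Prop) : bool :=
  if excluded_middle_informative P then true else false.

Section Splice.
Variables (V : finType) (adj : rel V) (d : V -> V -> nat).
(* d v a = weight d_{v,e} at vertex v of the edge e = {v,a} *)

(* simple paths u = x0, x1, ..., xk = v  (the sequence p is x1..xk) *)
Definition gpath (u v : V) (p : seq V) : Prop :=
  path adj u p /\ last u p = v /\ uniq (u :: p).

Definition is_tree : Prop :=
  (forall x y, adj x y = adj y x) /\ (forall x, ~~ adj x x) /\
  (forall u v, exists! p, gpath u v p).

Definition valency (v : V) : nat := #|[pred a | adj v a]|.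
Definition node (v : V) : bool := 3 <= valency v.
Definition leaf (v : V) : bool := valency v == 1.

Definition splice_diagram : Prop :=
  is_tree /\ (exists v, node v) /\ (forall v, valency v != 2) /\
  (forall v a, node v -> adj v a -> 0 < d v a).

Definition on_geod (u v w : V) : bool :=
  asb (exists p, gpath u v p /\ w \in u :: p).

Definition edge_on (u v a b : V) : bool :=
  asb (exists p, gpath u v p /\
        ((a, b) \in zip (u :: p) p \/ (b, a) \in zip (u :: p) p)).

Definition dv (v : V) : nat := \prod_(a | adj v a) d v a.

Definition ell (u v : V) : nat :=
  if u == v then dv v else
  \prod_(w | node w && on_geod u v w)
     \prod_(a | adj w a && ~~ edge_on u v w a) d w a.

Definition Lset (v a : V) : pred V :=
  [pred l | leaf l && edge_on v l v a].

Definition edge_determinant : Prop :=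
  forall u v, node u -> node v -> adj u v -> ell u v < d u v * d v u.

Definition semigroup_cond : Prop :=
  forall v a, node v -> adj v a ->
    exists alpha : V -> nat, dv v = \sum_(l | Lset v a l) alpha l * ell v l.

(* Vectors of R^n with the basis indexed by leaves: functions on V, read only
   at leaves. *)
Definition dotv (x y : V -> nat) : nat := \sum_(l | leaf l) x l * y l.

Definition wvec (u : V) : V -> nat :=
  fun l => if leaf u then (u == l : nat) else ell u l.

Definition coweight (alpha : V -> nat) (v a : V) : V -> nat :=
  fun l => if Lset v a l then alpha l else 0.

Definition admissible (alpha : V -> nat) (v a : V) : Prop :=
  dv v = \sum_(l | Lset v a l) alpha l * ell v l.

End Splice.

(* Main.v *)
Require Import Defs.
From mathcomp Require Import all_boot.
From Stdlib Require Import ClassicalEpsilon.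
From mathcomp Require Import zify.
Set Implicit Arguments. Unset Strict Implicit. Unset Printing Implicit Defensive.

Lemma asbP (Q : Prop) : reflect Q (asb Q).
Proof. rewrite /asb; case: excluded_middle_informative => h; by constructor. Qed.

Lemma cat_cancel (T : Type) (p q1 q2 : seq T) : p ++ q1 = p ++ q2 -> q1 = q2.
Proof. by elim: p => //= x p IH [] /IH. Qed.

Lemma zip_in (T : eqType) (x y : T) (s t : seq T) : (x, y) \in zip s t -> x \in s /\ y \in t.
Proof.
elim: s t => [|a s IH] [|b t] //=. rewrite in_cons => /orP [/eqP [-> ->]|/IH [h1 h2]].
  by rewrite !in_cons !eqxx.
by rewrite !in_cons h1 h2 !orbT.
Qed.

Lemma zip_last (T : eqType) (x a : T) (p q : seq T) :
  (last x p, a) \in zip (x :: p ++ a :: q) (p ++ a :: q).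
Proof.
elim: p x => [|b p IH] x /=; first by rewrite in_cons eqxx.
by rewrite in_cons IH orbT.
Qed.

Lemma ar1 A B Db : A * B * (Db * Db) = (A * Db) * (B * Db). Proof. lia. Qed.
Lemma ar2 C Dv Db : C * Dv * (Db * Db) = (Dv * Db) * (C * Db). Proof. lia. Qed.
Lemma ar3 C Dv Du : C * Dv * Du = (Dv * Du) * C. Proof. lia. Qed.
Lemma ar4 Z X Y : Z * X * (X * Y) = X * X * (Z * Y). Proof. lia. Qed.

Lemma ar5 al U W C D : U * W < C * D -> U * (al * W) + al <= al * C * D.
Proof. by move=> h; rewrite mulnCA -(mulnA al C D) -{2}(muln1 al) -mulnDr leq_mul2l addn1 h orbT. Qed.

Section Tree.
Variables (V : finType) (adj : rel V) (d : V -> V -> nat).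
Hypothesis Hsym : forall x y, adj x y = adj y x.
Hypothesis Hirr : forall x, ~~ adj x x.
Hypothesis Hex : forall u v, exists! p, gpath adj u v p.

Definition P u v : seq V := proj1_sig (constructive_indefinite_description _ (Hex u v)).

Lemma P_spec u v : gpath adj u v (P u v) /\ forall p, gpath adj u v p -> P u v = p.
Proof. by rewrite /P; case: constructive_indefinite_description => p []. Qed.

Lemma P_gpath u v : gpath adj u v (P u v).
Proof. by case: (P_spec u v). Qed.

Lemma P_eq u v p : gpath adj u v p -> P u v = p.
Proof. by case: (P_spec u v) => _; apply. Qed.

Lemma P_path u v : path adj u (P u v). Proof. by case: (P_gpath u v). Qed.
Lemma P_last u v : last u (P u v) = v. Proof. by case: (P_gpath u v) => _ []. Qed.
Lemma P_uniq u v : uniq (u :: P u v). Proof. by case: (P_gpath u v) => _ []. Qed.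

Definition g x y z := z \in x :: P x y.

Lemma Puu u : P u u = [::].
Proof. by apply: P_eq. Qed.

Lemma Padj u v : adj u v -> P u v = [:: v].
Proof.
move=> h; apply: P_eq; split; first by rewrite /= h.
split=> //=; rewrite in_cons orbF andbT; apply/eqP => e; subst.
by move: (Hirr v); rewrite h.
Qed.

Lemma P_nil u v : u != v -> P u v != [::].
Proof. move=> h; apply/eqP=> e; move: (P_last u v); rewrite e /= => e'; by rewrite e' eqxx in h. Qed.

Lemma gpath_cat x y p1 p2 : gpath adj x y (p1 ++ p2) ->
  gpath adj x (last x p1) p1 /\ gpath adj (last x p1) y p2.
Proof.
move=> [hp [hl hu]]; move: hp; rewrite cat_path => /andP [h1 h2].
move: hl; rewrite last_cat => hl.
move: hu; rewrite -cat_cons cat_uniq => /and3P [u1 u2 u3].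
split; first by [].
split=> //; split=> //=; rewrite u3 andbT.
apply/negP => hm; move/negP: u2; apply; apply/hasP; exists (last x p1) => //.
exact: mem_last.
Qed.

Lemma Pcat x y z : g x y z -> P x y = P x z ++ P z y.
Proof.
rewrite /g => h; have := P_gpath x y; case/splitPl: h => p1 p2 hl /gpath_cat.
by rewrite hl => -[h1 h2]; rewrite (P_eq h1) (P_eq h2).
Qed.

Lemma rev_consL (T : Type) (x : T) p : rev (x :: p) = last x p :: rev (belast x p).
Proof. by rewrite lastI rev_rcons. Qed.

Lemma last_rev_belast (T : Type) (x : T) p : last (last x p) (rev (belast x p)) = x.
Proof.
case: p => [|a p]; first by []. by rewrite [belast _ _]/= rev_cons last_rcons.
Qed.

Lemma Prev x y : P y x = rev (belast x (P x y)).
Proof.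
apply: P_eq; split.
  have h : path (fun z => adj^~ z) x (P x y).
    by rewrite (@eq_path _ _ adj) ?P_path // => a b; rewrite Hsym.
  by rewrite -rev_path P_last in h.
split; first by rewrite -{1}(P_last x y) last_rev_belast.
by have := rev_consL x (P x y); rewrite P_last => <-; rewrite rev_uniq; apply: P_uniq.
Qed.

Lemma gsym x y z : g x y z = g y x z.
Proof.
by rewrite /g (Prev x y); have := rev_consL x (P x y); rewrite P_last => <-; rewrite mem_rev.
Qed.

Lemma Cons v y a : adj v a -> g v y a -> P v y = a :: P a y.
Proof. by move=> h1 h2; rewrite (Pcat h2) Padj. Qed.

Lemma g_last x y : g x y y.
Proof. by have := mem_last x (P x y); rewrite P_last. Qed.

Lemma g_first x y : g x y x.
Proof. by rewrite /g in_cons eqxx. Qed.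

Lemma Ldisj x y w t : g x y w -> g x w t -> t \in P w y -> False.
Proof.
move=> hw ht ht2; have := P_uniq x y; rewrite (Pcat hw) -cat_cons cat_uniq.
by case/and3P => _ /hasPn /(_ t ht2); rewrite -/(g x w t) ht.
Qed.

Lemma gcat x y w t : g x y w -> g x y t = g x w t || g w y t.
Proof.
move=> hw; rewrite {1}/g (Pcat hw) -cat_cons mem_cat -/(g x w t).
rewrite /g [t \in w :: _]in_cons; case: (t =P w) => [->|_] //=.
by rewrite -/(g x w w) g_last.
Qed.

Lemma ginter x y w t : g x y w -> g x w t -> g w y t -> t = w.
Proof.
move=> hw h1; rewrite /g in_cons => /orP [/eqP //|h2].
by case: (Ldisj hw h1 h2).
Qed.

Lemma Disj x y w : w != x -> w != y -> head w (P w x) != head w (P w y) -> g x y w.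
Proof.
move=> hx hy hh.
have hq : gpath adj x y (P x w ++ P w y).
  split; first by rewrite cat_path P_path P_last P_path.
  split; first by rewrite last_cat P_last P_last.
  rewrite -cat_cons cat_uniq P_uniq /=.
  have := P_uniq w y; rewrite cons_uniq => /andP [wn ->]; rewrite andbT.
  apply/hasPn => t ht; apply/negP => ht2.
  have ht3 : g w x t by rewrite gsym.
  have ht4 : g w y t by rewrite /g in_cons ht orbT.
  have tw : t != w by apply/eqP => e; subst; rewrite ht in wn.
  move: hh; rewrite (Pcat ht3) (Pcat ht4).
  have := @P_nil w t; rewrite eq_sym tw => /(_ isT).
  by case: (P w t) => //= c r _; rewrite eqxx.
rewrite /g (P_eq hq) -cat_cons mem_cat -/(g x w w) g_last //.
Qed.

Lemma AG x y z a : g x y z -> g x y a -> adj z a ->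
  P z y = a :: P a y \/ P a y = z :: P z y.
Proof.
move=> hz ha hza.
move: (ha); rewrite /g (Pcat hz) -cat_cons mem_cat => /orP [h|h].
  right; have e1 := Pcat h; rewrite (@Padj a z) in e1; last by rewrite Hsym.
  apply: (@cat_cancel _ (P x a)); rewrite -(Pcat ha) (Pcat hz) e1 -catA //.
left; apply: Cons => //; by rewrite /g in_cons h orbT.
Qed.

Lemma FL x y w z a : g x y w -> g x w z -> z != w -> adj z a -> g x y a -> g x w a.
Proof.
move=> hw hz zw hza ha.
have hz' : g x y z by rewrite (gcat _ hw) hz.
case: (AG hz' ha hza) => e.
  have e2 : P z y = P z w ++ P w y.
    apply: (@cat_cancel _ (P x z)); by rewrite -(Pcat hz') (Pcat hw) (Pcat hz) catA.
  have := @P_nil z w zw; case E: (P z w) => [|c r] // _; move: e2; rewrite e E /= => -[-> _].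
  by rewrite /g (Pcat hz) E in_cons mem_cat in_cons eqxx !orbT.
case/boolP: (g x w a) => // hna; exfalso.
move: (ha); rewrite (gcat _ hw) (negbTE hna) /= /g in_cons => /orP [/eqP e'|ha'].
  by subst; rewrite g_last in hna.
have hwa : g w y a by rewrite /g in_cons ha' orbT.
apply: (Ldisj hw hz); rewrite (Pcat hwa) e mem_cat in_cons eqxx orbT //.
Qed.

Lemma on_geodE x y w : on_geod adj x y w = g x y w.
Proof.
apply/asbP/idP => [[p [hp h]]|h]; first by rewrite /g (P_eq hp).
by exists (P x y); split => //; apply: P_gpath.
Qed.

Lemma edge_onE x y w a : adj w a -> g x y w -> edge_on adj x y w a = g x y a.
Proof.
move=> hwa hw; apply/asbP/idP => [[p [hp h]]|ha].
  rewrite -(P_eq hp) in h; case: h => /zip_in [h1 h2] //.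
  by rewrite /g in_cons h2 orbT.
exists (P x y); split; first exact: P_gpath.
case: (AG hw ha hwa) => e.
  left; rewrite (Pcat hw) e; have := zip_last x a (P x w) (P a y); by rewrite P_last.
right; rewrite (Pcat ha) e; have := zip_last x w (P x a) (P w y); by rewrite P_last.
Qed.

Hypothesis Hval : forall v, valency adj v != 2.
Hypothesis Hpos : forall v a, node adj v -> adj v a -> 0 < d v a.

Definition E (e : V -> V -> nat) :=
  \prod_(z | node adj z) \prod_(a | adj z a) d z a ^ e z a.

Lemma E_mul e1 e2 : E e1 * E e2 = E (fun z a => e1 z a + e2 z a).
Proof.
rewrite /E -big_split; apply: eq_bigr => z _; rewrite -big_split.
by apply: eq_bigr => a _; rewrite expnD.
Qed.

Lemma E_ext e1 e2 : (forall z a, node adj z -> adj z a -> e1 z a = e2 z a) -> E e1 = E e2.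
Proof.
move=> h; rewrite /E; apply: eq_bigr => z hz; apply: eq_bigr => a ha; by rewrite h.
Qed.

Lemma E_pos e : 0 < E e.
Proof.
rewrite /E; apply: (big_ind (fun x => 0 < x)) => // [m n|z hz]; first by rewrite muln_gt0 => ->.
apply: (big_ind (fun x => 0 < x)) => // [m n|a ha]; first by rewrite muln_gt0 => ->.
by rewrite expn_gt0 Hpos.
Qed.

Lemma ellE x y : x != y -> ell adj d x y = E (fun z a => g x y z && ~~ g x y a).
Proof.
move=> h; rewrite /ell (negbTE h) /E big_mkcondr /=; apply: eq_bigr => z hz.
rewrite on_geodE; case hg: (g x y z) => /=.
  rewrite big_mkcondr; apply: eq_bigr => a ha; rewrite edge_onE //.
  by case: (g x y a); rewrite ?expn0 ?expn1.
by rewrite big1 // => a _; rewrite expn0.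
Qed.

Lemma dvE w : node adj w -> dv adj d w = E (fun z a => z == w).
Proof.
move=> hw; rewrite /E (bigD1 w) //= [X in _ * X]big1 ?muln1.
  by rewrite /dv; apply: eq_bigr => a _; rewrite eqxx expn1.
move=> z /andP [_ zw]; rewrite big1 // => a _; by rewrite (negbTE zw) expn0.
Qed.

Lemma E1 z0 a0 : node adj z0 -> adj z0 a0 -> E (fun z a => (z == z0) && (a == a0)) = d z0 a0.
Proof.
move=> hz ha; rewrite /E (bigD1 z0) //= [X in _ * X]big1 ?muln1.
  rewrite (bigD1 a0) //= [X in _ * X]big1 ?muln1; first by rewrite !eqxx expn1.
  by move=> a /andP [_ aa]; rewrite (negbTE aa) andbF expn0.
move=> z /andP [_ zw]; rewrite big1 // => a _; by rewrite (negbTE zw) expn0.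
Qed.

Lemma dv_pos w : 0 < dv adj d w -> True. Proof. by []. Qed.

Lemma adj_neq z a : adj z a -> z != a.
Proof. by move=> h; apply/eqP => e; subst; rewrite (negbTE (Hirr a)) in h. Qed.

Lemma factor x y w : g x y w -> w != x -> w != y -> node adj w ->
  ell adj d x y * dv adj d w = ell adj d x w * ell adj d w y.
Proof.
move=> hw wx wy nw.
have xy : x != y.
  apply/eqP => e; subst; move: hw; rewrite /g Puu in_cons orbF => /eqP e.
  by rewrite e eqxx in wx.
rewrite (ellE xy) (dvE nw) (ellE (x:=x)) 1?eq_sym // (ellE wy) !E_mul.
apply: E_ext => z a hz hza.
have za := adj_neq hza.
rewrite !(gcat _ hw).
case zw: (z == w).
  move/eqP: zw => zw; subst z.
  rewrite g_last g_first /=.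
  case hA: (g x w a); case hB: (g w y a) => //=.
  by have := ginter hw hA hB => e; subst; rewrite eqxx in za.
case hA: (g x w z) => /=.
  have hB : g w y z = false.
    by apply/negP => hB; have := ginter hw hA hB => e; rewrite e eqxx in zw.
  rewrite hB /= addn0.
  case hA': (g x w a) => //=.
  case hB': (g w y a) => //=.
  have : g x y a by rewrite (gcat _ hw) hB' orbT.
  by move/(FL hw hA (negbT zw) hza); rewrite hA'.
case hB: (g w y z) => //=.
case hB': (g w y a); rewrite ?orbT //= .
case hA': (g x w a) => //=.
have hw' : g y x w by rewrite gsym.
have hz' : g y w z by rewrite gsym.
have ha' : g y x a by rewrite gsym (gcat _ hw) hA'.
by move: (FL hw' hz' (negbT zw) hza ha'); rewrite gsym hB'.
Qed.

Lemma ell_sym x y : ell adj d x y = ell adj d y x.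
Proof.
case: (eqVneq x y) => [->//|xy]; rewrite (ellE xy) ellE 1?eq_sym //.
by apply: E_ext => z a _ _; rewrite !(gsym x y).
Qed.

Lemma ell_pos x y : x != y -> 0 < ell adj d x y.
Proof. by move=> h; rewrite (ellE h) E_pos. Qed.

Lemma dv_gt0 w : node adj w -> 0 < dv adj d w.
Proof. by move=> h; rewrite (dvE h) E_pos. Qed.

Lemma edge_ell x y : adj x y -> node adj x -> node adj y ->
  ell adj d x y * (d x y * d y x) = dv adj d x * dv adj d y.
Proof.
move=> hxy nx ny; have xy := adj_neq hxy.
have hyx : adj y x by rewrite Hsym.
rewrite (ellE xy) -(E1 nx hxy) -(E1 ny hyx) (dvE nx) (dvE ny) !E_mul.
apply: E_ext => z a hz hza; have za := adj_neq hza.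
rewrite /g (Padj hxy) !inE.
have yx : (y == x) = false by rewrite eq_sym (negbTE xy).
have xy' : (x == y) = false by apply: negbTE.
case: (eqVneq z x) => [e|zx]; case: (eqVneq z y) => [e'|zy];
 case: (eqVneq a x) => [e''|ax]; case: (eqVneq a y) => [e'''|ay]; subst;
 rewrite ?eqxx ?yx ?xy' //=; try by rewrite ?eqxx in xy za.
Qed.

Lemma edge_sq x y : adj x y -> node adj x -> node adj y ->
  ell adj d x y < d x y * d y x ->
  ell adj d x y * ell adj d x y < dv adj d x * dv adj d y.
Proof.
move=> hxy nx ny h; rewrite -(edge_ell hxy nx ny).
by rewrite ltn_pmul2l // ell_pos // adj_neq.
Qed.

Lemma interior x y z : g x y z -> z != x -> z != y -> node adj z.
Proof.
move=> hz zx zy.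
have := @P_nil z y zy; case Ey: (P z y) => [|c r] // _.
have := @P_nil z x zx; case Ex: (P z x) => [|c' r'] // _.
have hc : adj z c by have := P_path z y; rewrite Ey /= => /andP [].
have hc' : adj z c' by have := P_path z x; rewrite Ex /= => /andP [].
have cc : c != c'.
  apply/eqP => e; subst c'.
  have h1 : g x z c by rewrite gsym /g Ex !inE eqxx orbT.
  by apply: (Ldisj hz h1); rewrite Ey inE eqxx.
have : 1 < valency adj z by apply/card_gt1P; exists c, c'.
rewrite /node; have := Hval z; case: (valency adj z) => [|[|[|k]]] //.
Qed.

Lemma Elem u v l : u != v -> l != v -> node adj v ->
  head v (P v u) != head v (P v l) ->
  ell adj d u l * dv adj d v = ell adj d u v * ell adj d v l.
Proof.
move=> uv lv nv hh.
have vu : v != u by rewrite eq_sym.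
have vl : v != l by rewrite eq_sym.
have hg := Disj vu vl hh.
by apply: factor => //; rewrite eq_sym.
Qed.

Lemma node_leaf l : ~~ node adj l -> forall v, node adj v -> l != v.
Proof. by move=> h v hv; apply/eqP => e; subst; rewrite hv in h. Qed.

Lemma Slem u (nu : node adj u) (Hed : edge_determinant adj d) n :
  forall v l, node adj v -> v != u -> size (P v u) <= n -> ~~ node adj l ->
  g v l (head v (P v u)) ->
  ell adj d u v * ell adj d v l < ell adj d u l * dv adj d v.
Proof.
elim: n => [|n IH] v l nv vu hs nl hb.
  by move: hs; rewrite leqn0 size_eq0 (negbTE (P_nil vu)).
have := P_nil vu; case Eu: (P v u) => [|b q] // _.
rewrite Eu /= in hb hs.
have hvb : adj v b by have := P_path v u; rewrite Eu /= => /andP [].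
have hbu : g v u b by rewrite /g Eu !inE eqxx orbT.
have Eq : q = P b u by have := Cons hvb hbu; rewrite Eu => -[].
have bv : b != v by rewrite eq_sym adj_neq.
have lu := node_leaf nl nu.
have ul : u != l by rewrite eq_sym.
case: (eqVneq b u) => [e|bu].
  subst b.
  have F := factor hb bv ul nu.
  have Sq := edge_sq hvb nv nu (Hed _ _ nv nu hvb).
  have Cp : 0 < ell adj d u l by apply: ell_pos.
  have Dp := dv_gt0 nu.
  rewrite ell_sym -(ltn_pmul2r Dp).
  move: F Sq Cp Dp; set A := ell adj d v u; set B := ell adj d v l; set C := ell adj d u l.
  move: (dv adj d u) (dv adj d v) => Du Dv F Sq Cp Dp.
  have -> : A * B * Du = (A * A) * C by rewrite -mulnA F mulnA.
  rewrite (ar3 C Dv Du).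
  by rewrite ltn_pmul2r.
have nb : node adj b by apply: (interior hbu).
have lb := node_leaf nl nb.
have bl : b != l by rewrite eq_sym.
have F1 := factor hb bv bl nb.
have hbu' : g u v b by rewrite gsym.
have F2 := factor hbu' bu bv nb.
have Sq := edge_sq hvb nv nb (Hed _ _ nv nb hvb).
have K : ell adj d u b * ell adj d b l <= ell adj d u l * dv adj d b.
  case hb2: (g b l (head b (P b u))).
    by apply: ltnW; apply: IH => //; rewrite -Eq.
  rewrite (Elem _ _ nb) // ?(eq_sym u) //.
  apply/negP => /eqP e; move: hb2; rewrite e /g.
  have := @P_nil b l bl; case: (P b l) => [|c r] // _.
  by rewrite /= !inE eqxx orbT.
have Cp : 0 < ell adj d u l by apply: ell_pos.
have Dp := dv_gt0 nb.
rewrite (ell_sym b v) in F2.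
move: F1 F2 Sq K Cp Dp.
move: (ell adj d u v) (ell adj d v l) (ell adj d u l) (ell adj d v b) (ell adj d b l) (ell adj d u b).
move: (dv adj d b) (dv adj d v) => Db Dv A B C X Y Z F1 F2 Sq K Cp Dp.
have DD : 0 < Db * Db by rewrite muln_gt0 Dp.
rewrite -(ltn_pmul2r DD).
have -> : A * B * (Db * Db) = (X * X) * (Z * Y).
  by rewrite (ar1 A B Db) F1 F2 ar4.
apply: (@leq_ltn_trans ((X * X) * (C * Db))); first by rewrite leq_mul2l K orbT.
rewrite (ar2 C Dv Db).
by rewrite ltn_pmul2r ?muln_gt0 ?Cp.
Qed.

Lemma leaf_not_node l : leaf adj l -> ~~ node adj l.
Proof. by rewrite /leaf /node => /eqP ->. Qed.

Lemma main (Hed : edge_determinant adj d) u v a (alpha : V -> nat) :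
    node adj u -> node adj v -> adj v a ->
    admissible adj d alpha v a ->
    ell adj d u v <= dotv adj (wvec adj d u) (coweight adj alpha v a) /\
    (dotv adj (wvec adj d u) (coweight adj alpha v a) = ell adj d u v
       <-> ~~ edge_on adj u v v a).
Proof.
move=> nu nv hva; rewrite /admissible.
have LsE : forall l, Lset adj v a l = leaf adj l && g v l a.
  move=> l; rewrite /Lset /=; case hl: (leaf adj l) => //=.
  have lv := node_leaf (leaf_not_node hl) nv.
  by rewrite edge_onE // g_first.
have lu : leaf adj u = false by apply/negP => /leaf_not_node; rewrite nu.
have SE : dotv adj (wvec adj d u) (coweight adj alpha v a) =
          \sum_(l | leaf adj l && g v l a) alpha l * ell adj d u l.
  rewrite /dotv /wvec /coweight lu [RHS]big_mkcondr /=; apply: eq_bigr => l hl.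
  by rewrite LsE hl /=; case: (g v l a); rewrite ?muln0 // mulnC.
rewrite SE (eq_bigl _ _ LsE).
set Ls := fun l => leaf adj l && g v l a.
move=> Hadm.
have Hl : forall l, Ls l -> [/\ ~~ node adj l, l != v & head v (P v l) = a].
  move=> l /andP [hl hg]; have nl := leaf_not_node hl; split => //.
    exact: node_leaf.
  by rewrite (Cons hva hg).
have Dp := dv_gt0 nv.
case: (eqVneq u v) => [e|uv].
  subst u; rewrite /ell eqxx Hadm; split => //; split => // _.
  by rewrite edge_onE // ?g_first // /g Puu inE eq_sym adj_neq.
have vu : v != u by rewrite eq_sym.
set b := head v (P v u).
have ea : edge_on adj u v v a = (a == b).
  rewrite edge_onE // ?g_last // gsym; apply/idP/eqP => [h|->].
    by rewrite /b (Cons hva h).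
  by rewrite /b /g; have := P_nil vu; case: (P v u) => //= c r _; rewrite !inE eqxx orbT.
rewrite ea.
case: (eqVneq a b) => [eab|nab].
  have Hlt : forall l, Ls l -> ell adj d u v * ell adj d v l < ell adj d u l * dv adj d v.
    move=> l hL; have [nl lv hh] := Hl l hL.
    apply: (Slem nu Hed (n:=size (P v u))) => //.
    by move: hL => /andP [_]; rewrite -/b -eab.
  have Sp : 0 < \sum_(l | Ls l) alpha l.
    rewrite lt0n; apply/negP => /eqP h0.
    have : dv adj d v = 0.
      rewrite Hadm big1 // => l hL.
      have : alpha l <= 0 by rewrite -h0 (bigD1 l) //= leq_addr.
      by rewrite leqn0 => /eqP ->.
    by move=> e; rewrite e in Dp.
  have key : ell adj d u v * dv adj d v < (\sum_(l | Ls l) alpha l * ell adj d u l) * dv adj d v.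
    rewrite {1}Hadm big_distrr big_distrl /=.
    apply: (@leq_trans ((\sum_(l | Ls l) ell adj d u v * (alpha l * ell adj d v l)) + \sum_(l | Ls l) alpha l)).
      by rewrite -[X in X < _]addn0 ltn_add2l.
    rewrite -big_split /=; apply: leq_sum => l hL.
    by apply: ar5; apply: Hlt.
  rewrite ltn_pmul2r // in key.
  split; first exact: ltnW.
  split => // e; by rewrite e ltnn in key.
have Heq : forall l, Ls l -> ell adj d u l * dv adj d v = ell adj d u v * ell adj d v l.
  move=> l hL; have [nl lv hh] := Hl l hL.
  apply: Elem => //; by rewrite -/b hh eq_sym.
have key : (\sum_(l | Ls l) alpha l * ell adj d u l) * dv adj d v = ell adj d u v * dv adj d v.
  rewrite {2}Hadm big_distrr big_distrl /=; apply: eq_bigr => l hL.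
  by rewrite -mulnA Heq // mulnCA.
move/eqP: key; rewrite eqn_pmul2r // => /eqP ->; split => //.
Qed.

End Tree.

Theorem lemma2p17 (V : finType) (adj : rel V) (d : V -> V -> nat) :
  splice_diagram adj d ->
  edge_determinant adj d ->
  semigroup_cond adj d ->
  forall (u v a : V) (alpha : V -> nat),
    node adj u -> node adj v -> adj v a ->
    admissible adj d alpha v a ->
    ell adj d u v <= dotv adj (wvec adj d u) (coweight adj alpha v a) /\
    (dotv adj (wvec adj d u) (coweight adj alpha v a) = ell adj d u v
       <-> ~~ edge_on adj u v v a).
Proof.
move=> [[Hsym [Hirr Hex]] [_ [Hval Hpos]]] Hed _ u v a alpha.
exact: (main Hsym Hirr Hex Hval Hpos Hed).
Qed.
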